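(* Let $\Gamma\subseteq\mathit{Aff}(2,\mathbb{H})$ be a subgroup acting freely on $\mathbb{H}^2$. Then $\Gamma$ is conjugate in $\mathit{Aff}(2,\mathbb{H})$ to a subgroup of $G_2$.
   Context: $\mathit{Aff}(2,\mathbb{H})$ is identified with invertible $3\times3$ quaternionic matrices $\begin{pmatrix} a&b&r\\ c&d&s\\ 0&0&1\end{pmatrix}$ acting on $(x,y)\in\mathbb{H}^2$ by $(x,y)\mapsto(ax+by+r,cx+dy+s)$. $G_2=\left\{\begin{pmatrix} 1&b&r\\ 0&d&s\\ 0&0&1\end{pmatrix}: b,r,s,d\in\mathbb{H}, d\neq0\right\}$. *)

(* Defs.v *)
From HB Require Import structures.
From mathcomp Require Import all_boot all_order all_algebra.
From mathcomp Require Import reals.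
Set Implicit Arguments. Unset Strict Implicit. Unset Printing Implicit Defensive.
Import Order.TTheory GRing.Theory Num.Theory.
Local Open Scope ring_scope.

Section Quaternions.
Variable R : realType.

Record quat := Quat { qr : R; qi : R; qj : R; qk : R }.

Definition q0 : quat := Quat 0 0 0 0.
Definition q1 : quat := Quat 1 0 0 0.

Definition qadd (p q : quat) : quat :=
  Quat (qr p + qr q) (qi p + qi q) (qj p + qj q) (qk p + qk q).

(** Hamilton product (i^2 = j^2 = k^2 = ijk = -1). *)
Definition qmul (p q : quat) : quat :=
  Quat (qr p * qr q - qi p * qi q - qj p * qj q - qk p * qk q)
       (qr p * qi q + qi p * qr q + qj p * qk q - qk p * qj q)
       (qr p * qj q - qi p * qk q + qj p * qr q + qk p * qi q)
       (qr p * qk q + qi p * qj q - qj p * qi q + qk p * qr q).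

(** An element of Aff(2,H) written as the quaternionic matrix
    [[a, b, r], [c, d, s], [0, 0, 1]]. *)
Record aff := Aff { aa : quat; ab : quat; ac : quat; ad : quat;
                    ar : quat; as' : quat }.

Definition act (g : aff) (p : quat * quat) : quat * quat :=
  (qadd (qadd (qmul (aa g) p.1) (qmul (ab g) p.2)) (ar g),
   qadd (qadd (qmul (ac g) p.1) (qmul (ad g) p.2)) (as' g)).

(** Matrix product g * h (corresponds to act g \o act h). *)
Definition acomp (g h : aff) : aff :=
  Aff (qadd (qmul (aa g) (aa h)) (qmul (ab g) (ac h)))
      (qadd (qmul (aa g) (ab h)) (qmul (ab g) (ad h)))
      (qadd (qmul (ac g) (aa h)) (qmul (ad g) (ac h)))
      (qadd (qmul (ac g) (ab h)) (qmul (ad g) (ad h)))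
      (qadd (qadd (qmul (aa g) (ar h)) (qmul (ab g) (as' h))) (ar g))
      (qadd (qadd (qmul (ac g) (ar h)) (qmul (ad g) (as' h))) (as' g)).

Definition aid : aff := Aff q1 q0 q0 q1 q0 q0.

Definition in_Aff (g : aff) : Prop :=
  exists h, acomp g h = aid /\ acomp h g = aid.

Definition is_Aff_subgroup (Gamma : aff -> Prop) : Prop :=
  [/\ forall g, Gamma g -> in_Aff g,
      Gamma aid,
      forall g h, Gamma g -> Gamma h -> Gamma (acomp g h) &
      forall g, Gamma g ->
        exists h, [/\ Gamma h, acomp g h = aid & acomp h g = aid]].

Definition acts_freely (Gamma : aff -> Prop) : Prop :=
  forall g, Gamma g -> forall p, act g p = p -> g = aid.

Definition in_G2 (g : aff) : Prop :=
  [/\ aa g = q1, ac g = q0 & ad g <> q0].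

End Quaternions.

(* Main.v *)
Require Import Defs.
From HB Require Import structures.
From mathcomp Require Import all_boot all_order all_algebra.
From mathcomp Require Import reals.
From mathcomp Require Import ring lra.
From Stdlib Require Import Classical.
Set Implicit Arguments. Unset Strict Implicit. Unset Printing Implicit Defensive.
Import Order.TTheory GRing.Theory Num.Theory.
Local Open Scope ring_scope.

Section Q.
Variable R : realType.
Local Notation H := (quat R).

Definition q2t (q : H) := (qr q, qi q, qj q, qk q).
Definition t2q (t : R * R * R * R) : H := let: (a,b,c,d) := t in Quat a b c d.
Lemma q2tK : cancel q2t t2q. Proof. by case. Qed.
HB.instance Definition _ := Choice.copy H (can_type q2tK).

Lemma quat_ext (p q : H) : qr p = qr q -> qi p = qi q -> qj p = qj q -> qk p = qk q -> p = q.
Proof. by case: p => ????; case: q => ???? /= -> -> -> ->. Qed.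

Definition qopp (p : H) : H := Quat (- qr p) (- qi p) (- qj p) (- qk p).

Lemma qaddA : associative (@qadd R).
Proof. by move=> ???; apply: quat_ext => /=; ring. Qed.
Lemma qaddC : commutative (@qadd R).
Proof. by move=> ??; apply: quat_ext => /=; ring. Qed.
Lemma qadd0 : left_id (q0 R) (@qadd R).
Proof. by move=> ?; apply: quat_ext => /=; ring. Qed.
Lemma qaddN : left_inverse (q0 R) qopp (@qadd R).
Proof. by move=> ?; apply: quat_ext => /=; ring. Qed.
Lemma qmulA : associative (@qmul R).
Proof. by move=> ???; apply: quat_ext => /=; ring. Qed.
Lemma qmul1 : left_id (q1 R) (@qmul R).
Proof. by move=> ?; apply: quat_ext => /=; ring. Qed.
Lemma qmulr1 : right_id (q1 R) (@qmul R).
Proof. by move=> ?; apply: quat_ext => /=; ring. Qed.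
Lemma qmulDl : left_distributive (@qmul R) (@qadd R).
Proof. by move=> ???; apply: quat_ext => /=; ring. Qed.
Lemma qmulDr : right_distributive (@qmul R) (@qadd R).
Proof. by move=> ???; apply: quat_ext => /=; ring. Qed.
Lemma q1_neq0 : q1 R != q0 R.
Proof. by apply/eqP => -[] /eqP; rewrite oner_eq0. Qed.

HB.instance Definition _ := GRing.isNzRing.Build H qaddA qaddC qadd0 qaddN
  qmulA qmul1 qmulr1 qmulDl qmulDr q1_neq0.

Definition qn (q : H) := qr q ^+ 2 + qi q ^+ 2 + qj q ^+ 2 + qk q ^+ 2.
Definition qinv (q : H) : H :=
  Quat (qr q / qn q) (- qi q / qn q) (- qj q / qn q) (- qk q / qn q).

Lemma qn_eq0 q : (qn q == 0) = (q == 0).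
Proof.
apply/idP/idP; last by move/eqP->; rewrite /qn /=; apply/eqP; ring.
rewrite /qn => /eqP E.
have h1 : 0 <= qr q ^+ 2 by rewrite sqr_ge0.
have h2 : 0 <= qi q ^+ 2 by rewrite sqr_ge0.
have h3 : 0 <= qj q ^+ 2 by rewrite sqr_ge0.
have h4 : 0 <= qk q ^+ 2 by rewrite sqr_ge0.
have e1 : qr q ^+ 2 = 0 by lra.
have e2 : qi q ^+ 2 = 0 by lra.
have e3 : qj q ^+ 2 = 0 by lra.
have e4 : qk q ^+ 2 = 0 by lra.
apply/eqP; apply: quat_ext => /=; apply/eqP; rewrite -sqrf_eq0; apply/eqP => //.
Qed.

Definition qunit := [pred q : H | q != 0].

Lemma qmulV : {in qunit, left_inverse 1 qinv *%R}.
Proof.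
move=> q; rewrite inE -qn_eq0 => nz; apply: quat_ext => /=; rewrite /qn in nz *; field; done.
Qed.
Lemma qmulrV : {in qunit, right_inverse 1 qinv *%R}.
Proof.
move=> q; rewrite inE -qn_eq0 => nz; apply: quat_ext => /=; rewrite /qn in nz *; field; done.
Qed.
Lemma qunitP : forall x y : H, y * x = 1 /\ x * y = 1 -> qunit x.
Proof.
move=> x y [E _]; rewrite inE; apply/eqP => x0; move: E; rewrite x0 mulr0 => /eqP.
by rewrite eq_sym oner_eq0.
Qed.
Lemma qinv_out : {in [predC qunit], qinv =1 id}.
Proof.
move=> q; rewrite !inE negbK => /eqP ->; apply: quat_ext => /=; rewrite ?mul0r ?oppr0 ?mul0r //.
Qed.

HB.instance Definition _ := GRing.NzRing_hasMulInverse.Build H qmulV qmulrV qunitP qinv_out.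

Lemma qunitE (x : H) : (x \is a GRing.unit) = (x != 0).
Proof. by []. Qed.


Lemma qE_add (x y : H) : x + y = qadd x y. Proof. by []. Qed.
Lemma qE_mul (x y : H) : x * y = qmul x y. Proof. by []. Qed.
Lemma qE_opp (x : H) : - x = qopp x. Proof. by []. Qed.
Lemma qE_0 : (0 : H) = q0 R. Proof. by []. Qed.
Lemma qE_1 : (1 : H) = q1 R. Proof. by []. Qed.
Definition qE := (qE_add, qE_mul, qE_opp, qE_0, qE_1).

Ltac qring := apply: quat_ext; rewrite ?qE /=; ring.


Local Notation Af := (aff R).

Lemma acompE (g h : Af) : acomp g h = Aff (aa g * aa h + ab g * ac h) (aa g * ab h + ab g * ad h)
  (ac g * aa h + ad g * ac h) (ac g * ab h + ad g * ad h)
  (aa g * ar h + ab g * as' h + ar g) (ac g * ar h + ad g * as' h + as' g).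
Proof. by []. Qed.
Lemma aidE : aid R = Aff 1 0 0 1 0 0. Proof. by []. Qed.
Lemma actE (g : Af) x y : act g (x, y) = (aa g * x + ab g * y + ar g, ac g * x + ad g * y + as' g).
Proof. by []. Qed.

Lemma acompA (g h k : Af) : acomp g (acomp h k) = acomp (acomp g h) k.
Proof. rewrite !acompE /=; congr Aff; qring. Qed.
Lemma acom1g (g : Af) : acomp (aid R) g = g.
Proof. case: g => * /=; rewrite acompE aidE /=; congr Aff; qring. Qed.
Lemma acomg1 (g : Af) : acomp g (aid R) = g.
Proof. case: g => * /=; rewrite acompE aidE /=; congr Aff; qring. Qed.
Lemma actM (g h : Af) p : act (acomp g h) p = act g (act h p).
Proof. case: p => x y; rewrite !actE acompE /=; congr pair; qring. Qed.
Lemma act1 p : act (aid R) p = p.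
Proof. case: p => x y; rewrite actE aidE /=; congr pair; qring. Qed.

Section Grp.
Variable G : Af -> Prop.
Hypothesis sg : is_Aff_subgroup G.
Hypothesis fr : acts_freely G.

Lemma Gmul g h : G g -> G h -> G (acomp g h).
Proof. by case: sg => _ _ M _; apply: M. Qed.

Lemma coinc g1 g2 p : G g1 -> G g2 -> act g1 p = act g2 p -> g1 = g2.
Proof.
move=> G1 G2 E; case: sg => _ _ M I; have [g2i [G2i E1 E2]] := I g2 G2.
have K : acomp g1 g2i = aid R.
  have F := fr (M _ _ G1 G2i) (p := act g2 p); apply: F.
  by rewrite actM -(actM g2i g2) E2 act1 E.
by rewrite -[g1]acomg1 -E2 acompA K acom1g.
Qed.
End Grp.

Lemma L1_id (a b d e i x : H) : a * (i * (e - d * x)) + b * x = a * i * e + (b - a * i * d) * x.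
Proof. qring. Qed.
Lemma L1_id2 (u v y : H) : u + (y - v) = y + (u - v).
Proof. qring. Qed.

Lemma solve_L1 (m11 m12 m21 m22 y1 y2 : H) : m21 != 0 -> m12 - m11 * m21^-1 * m22 != 0 ->
  exists x1 x2, m11 * x1 + m12 * x2 = y1 /\ m21 * x1 + m22 * x2 = y2.
Proof.
move=> n21 ns.
exists (m21^-1 * (y2 - m22 * ((m12 - m11 * m21^-1 * m22)^-1 * (y1 - m11 * m21^-1 * y2)))),
  ((m12 - m11 * m21^-1 * m22)^-1 * (y1 - m11 * m21^-1 * y2)); split.
  by rewrite L1_id mulVKr ?qunitE // L1_id2 subrr addr0.
by rewrite mulVKr ?qunitE // subrK.
Qed.

Lemma solve_tri (p q s y1 y2 : H) : p != 0 -> s != 0 ->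
  exists x1 x2, p * x1 + q * x2 = y1 /\ 0 * x1 + s * x2 = y2.
Proof.
move=> np ns; exists (p^-1 * (y1 - q * (s^-1 * y2))), (s^-1 * y2); split.
  by rewrite mulVKr ?qunitE // subrK.
by rewrite mul0r add0r mulVKr ?qunitE.
Qed.

Lemma dich (p q r s : H) :
  (exists x1 x2, (x1 != 0 \/ x2 != 0) /\ p * x1 + q * x2 = 0 /\ r * x1 + s * x2 = 0) \/
  (forall y1 y2, exists x1 x2, p * x1 + q * x2 = y1 /\ r * x1 + s * x2 = y2).
Proof.
have [r0|nr] := eqVneq r 0.
  have [p0|np] := eqVneq p 0.
    left; exists 1, 0; split; first by left; rewrite oner_eq0.
    by rewrite p0 r0 !mulr0 !mul0r !addr0.
  have [s0|ns] := eqVneq s 0.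
    left; exists (- (p^-1 * q)), 1; split; first by right; rewrite oner_eq0.
    by rewrite r0 s0 !mul0r addr0 mulr1 mulrN mulVKr ?qunitE // addNr.
  by right => y1 y2; rewrite r0; apply: solve_tri.
have [s0|ns] := eqVneq (q - p * r^-1 * s) 0.
  left; exists (- (r^-1 * s)), 1; split; first by right; rewrite oner_eq0.
  split; last by rewrite mulr1 mulrN mulVKr ?qunitE // addNr.
  by rewrite mulr1 mulrN mulrA addrC.
by right => y1 y2; apply: solve_L1.
Qed.


Lemma by_diff (L Rr P Q : H) : L - Rr = P - Q -> P = Q -> L = Rr.
Proof. by move=> E PQ; apply/eqP; rewrite -subr_eq0 E PQ subrr. Qed.

Lemma fs_id (a b x y r : H) : a * x + b * y + r = x + ((a - 1) * x + b * y + r).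
Proof. qring. Qed.

Lemma aid_aa g : g = aid R -> aa g = 1. Proof. by move->. Qed.
Lemma aid_ab g : g = aid R -> ab g = 0. Proof. by move->. Qed.
Lemma aid_ac g : g = aid R -> ac g = 0. Proof. by move->. Qed.
Lemma aid_ad g : g = aid R -> ad g = 1. Proof. by move->. Qed.

Lemma unit_neq0 (x : H) : x \is a GRing.unit -> x != 0. Proof. by []. Qed.
Lemma neq0_unit (x : H) : x != 0 -> x \is a GRing.unit. Proof. by []. Qed.

Lemma mul_neq0 (x y : H) : x != 0 -> y != 0 -> x * y != 0.
Proof. by move=> /neq0_unit ux /neq0_unit uy; apply: unit_neq0; rewrite unitrMl. Qed.

Section Main.
Variable G : Af -> Prop.
Hypothesis sg : is_Aff_subgroup G.
Hypothesis fr : acts_freely G.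

Lemma fix_sol g : G g -> (exists x1 x2, (aa g - 1) * x1 + ab g * x2 = - ar g /\
   ac g * x1 + (ad g - 1) * x2 = - as' g) -> g = aid R.
Proof.
move=> Gg [x1 [x2 [E1 E2]]]; apply: (fr Gg (p := (x1, x2))).
rewrite actE; congr pair.
  by rewrite fs_id E1 addNr addr0.
have -> : ac g * x1 + ad g * x2 + as' g = x2 + (ac g * x1 + (ad g - 1) * x2 + as' g) by qring.
by rewrite E2 addNr addr0.
Qed.

Lemma ad_neq0 g : G g -> ac g = 0 -> ad g != 0.
Proof.
move=> Gg c0; case: sg => A _ _ _; have [h [E _]] := A g Gg.
have := f_equal (@ad R) E; rewrite acompE /= c0 => E'; apply/eqP => d0; move: E'.
rewrite d0 !mul0r addr0 => /eqP; rewrite eq_sym; exact/negP/oner_neq0.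
Qed.

Lemma schur0 a b c e r s : G (Aff a b c e r s) -> c != 0 -> b - (a - 1) * c^-1 * (e - 1) = 0.
Proof.
move=> Gh nc; apply/eqP; apply: contraT => nS.
have [x1 [x2 [E1 E2]]] := solve_L1 (- r) (- s) nc nS.
have hid := fix_sol Gh (ex_intro _ x1 (ex_intro _ x2 (conj E1 E2))).
have c0 : c = 0 := aid_ac hid.
by rewrite c0 eqxx in nc.
Qed.

Lemma idU1 (a b c i : H) : (a + b * c - 1) * i = (a - 1) * i + b * c * i. Proof. qring. Qed.
Lemma idU2 (a b be e i : H) : be + b * e - ((a - 1) * i + b) * (e - 1) = (be - (a - 1) * i * (e - 1)) + b.
Proof. qring. Qed.

Lemma partI_U b t1 t2 : b != 0 -> G (Aff 1 b 0 1 t1 t2) -> forall h, G h -> ac h = 0.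
Proof.
move=> nb G0 [a be c e r s] Gh /=; have [//|nc] := eqVneq c 0; exfalso.
have S0 := schur0 Gh nc.
have Gk := Gmul sg G0 Gh.
have Ek : acomp (Aff 1 b 0 1 t1 t2) (Aff a be c e r s) = Aff (a + b * c) (be + b * e) c e (r + b * s + t1) (s + t2).
  by rewrite acompE /=; congr Aff; qring.
rewrite Ek in Gk.
have := schur0 Gk nc.
by rewrite idU1 mulrK ?qunitE // idU2 S0 add0r => /eqP; rewrite (negbTE nb).
Qed.

Lemma idS1 (a ci di x : H) : (a - 1) * (ci * di) * x = (a - 1) * ci * (di * x). Proof. qring. Qed.
Lemma idS2 (be A e di : H) : (be - A * (e - di)) - (be - A * (e - 1)) = A * (di - 1). Proof. qring. Qed.

Lemma coinc_S (d c e s t1 t2 r x : H) : (d - 1) * c * x = c * t1 + e * t2 + s - (d * s + t2) ->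
  act (Aff 1 0 (d * c) (d * e) (r + t1) (d * s + t2)) (x, 0) =
  act (Aff 1 0 c (e * d) (t1 + r) (c * t1 + e * t2 + s)) (x, 0).
Proof.
move=> Hx; rewrite !actE /=; congr pair; first by qring.
by apply: (by_diff _ Hx); qring.
Qed.

Lemma partI_S d t1 t2 : d != 1 -> G (Aff 1 0 0 d t1 t2) -> forall h, G h -> ac h = 0.
Proof.
move=> nd1 G0 h Gh.
have nd0 : d != 0 := ad_neq0 G0 erefl.
move: h Gh => [a be c e r s] Gh /=; have [//|nc] := eqVneq c 0; exfalso.
have S0 := schur0 Gh nc.
have Gk := Gmul sg G0 Gh.
have Ek : acomp (Aff 1 0 0 d t1 t2) (Aff a be c e r s) = Aff a be (d * c) (d * e) (r + t1) (d * s + t2).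
  by rewrite acompE /=; congr Aff; qring.
rewrite Ek in Gk.
have ndc : d * c != 0 by apply: mul_neq0.
have := schur0 Gk ndc.
rewrite invrM ?qunitE // idS1 mulrBr mulKr ?qunitE // mulr1 => S1.
have := idS2 be ((a - 1) * c^-1) e d^-1; rewrite S1 S0 subrr => /esym Z.
have a1 : a = 1.
  apply/eqP; rewrite -subr_eq0; apply: contraT => na.
  have : (a - 1) * c^-1 * (d^-1 - 1) != 0.
    apply: mul_neq0; first by apply: mul_neq0; rewrite // invr_eq0.
    by rewrite subr_eq0 invr_eq1.
  by rewrite Z eqxx.
move: S0; rewrite a1 subrr !mul0r subr0 => be0.
subst a be.
have Gk2 := Gmul sg Gh G0.
have Ek2 : acomp (Aff 1 0 c e r s) (Aff 1 0 0 d t1 t2) = Aff 1 0 c (e * d) (t1 + r) (c * t1 + e * t2 + s).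
  by rewrite acompE /=; congr Aff; qring.
rewrite Ek2 in Gk2.
have ndc1 : (d - 1) * c != 0 by apply: mul_neq0; rewrite // subr_eq0.
have Hx : (d - 1) * c * (((d - 1) * c)^-1 * (c * t1 + e * t2 + s - (d * s + t2)))
   = c * t1 + e * t2 + s - (d * s + t2) by rewrite mulVKr.
have E := coinc sg fr Gk Gk2 (coinc_S r Hx).
have /= dcc := f_equal (@ac R) E.
by move: ndc1; rewrite mulrBl mul1r dcc subrr eqxx.
Qed.

End Main.
End Q.

Ltac qring := apply: quat_ext; rewrite ?qE /=; ring.


Section Q2.
Variable R : realType.
Local Notation H := (quat R).
Local Notation Af := (aff R).

Definition goal (G : Af -> Prop) := exists h hinv : Af,
    [/\ acomp h hinv = aid R, acomp hinv h = aid R &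
        forall g, G g -> in_G2 (acomp (acomp h g) hinv)].

Lemma coinc_U (a b be t1 t2 r s x : H) : (a - 1) * b * x = b * s + t1 - a * t1 - be * t2 ->
  act (Aff a (a * b + be) 0 1 (a * t1 + be * t2 + r) (t2 + s)) (0, x) =
  act (Aff a (be + b) 0 1 (r + b * s + t1) (s + t2)) (0, x).
Proof.
move=> Hx; rewrite !actE /=; congr pair; last by qring.
by apply: (by_diff _ Hx); qring.
Qed.

Section G.
Variable G : Af -> Prop.
Hypothesis sg : is_Aff_subgroup G.
Hypothesis fr : acts_freely G.

Lemma claim1 : (forall h, G h -> ac h = 0) -> forall g, G g -> aa g = 1 \/ ad g = 1.
Proof.
move=> ci [a be c e r s] Gg /=; have c0 : c = 0 := ci _ Gg; subst c.
have [a1|na] := eqVneq a 1; first by left.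
have [e1|ne] := eqVneq e 1; first by right.
exfalso.
have np : a - 1 != 0 by rewrite subr_eq0.
have ns : e - 1 != 0 by rewrite subr_eq0.
have [x1 [x2 [E1 E2]]] := solve_tri be (- r) (- s) np ns.
have hid := fix_sol fr Gg (ex_intro _ x1 (ex_intro _ x2 (conj E1 E2))).
have a1 : a = 1 := aid_aa hid.
by rewrite a1 eqxx in na.
Qed.

Lemma claim2 : (forall h, G h -> ac h = 0) ->
  forall h1, G h1 -> aa h1 != 1 -> forall h2, G h2 -> ad h2 = 1.
Proof.
move=> ci h1 G1 n1 h2 G2; have [//|n2] := eqVneq (ad h2) 1; exfalso.
have a2 : aa h2 = 1 by case: (claim1 ci G2) => // E; rewrite E eqxx in n2.
have d1 : ad h1 = 1 by case: (claim1 ci G1) => // E; rewrite E eqxx in n1.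
have G12 := Gmul sg G1 G2.
move: (claim1 ci G12); rewrite acompE /= a2 d1 (ci _ G1) (ci _ G2) mulr1 mulr0 addr0 mul0r add0r mul1r; case=> E.
  by rewrite E eqxx in n1.
by rewrite E eqxx in n2.
Qed.

Lemma final b d t1 t2 : G (Aff 1 b 0 d t1 t2) -> (b = 0 /\ d != 1) \/ (d = 1 /\ b != 0) ->
  forall h, G h -> aa h = 1 /\ ac h = 0.
Proof.
move=> G0 H0.
have ci : forall h, G h -> ac h = 0.
  case: H0 => [[b0 nd]|[d1 nb]].
    by subst b; move=> h; apply: (partI_S sg fr nd G0).
  by subst d; move=> h; apply: (partI_U sg fr nb G0).
move=> h Gh; split; last exact: ci.
apply/eqP; apply: contraT => na.
have dall := claim2 ci Gh na.
have d1 : d = 1 := dall _ G0.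
have nb : b != 0 by case: H0 => [[_ nd]|[_ nb]] //; rewrite d1 eqxx in nd.
subst d.
move: h Gh na dall => [a be c e r s] Gh /= na dall.
have c0 : c = 0 := ci _ Gh.
have e1 : e = 1 := dall _ Gh.
subst c e.
have Gk1 := Gmul sg Gh G0.
have Gk2 := Gmul sg G0 Gh.
have Ek1 : acomp (Aff a be 0 1 r s) (Aff 1 b 0 1 t1 t2) = Aff a (a * b + be) 0 1 (a * t1 + be * t2 + r) (t2 + s).
  by rewrite acompE /=; congr Aff; qring.
have Ek2 : acomp (Aff 1 b 0 1 t1 t2) (Aff a be 0 1 r s) = Aff a (be + b) 0 1 (r + b * s + t1) (s + t2).
  by rewrite acompE /=; congr Aff; qring.
rewrite Ek1 in Gk1; rewrite Ek2 in Gk2.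
have nab : (a - 1) * b != 0 by apply: mul_neq0; rewrite // subr_eq0.
have Hx : (a - 1) * b * (((a - 1) * b)^-1 * (b * s + t1 - a * t1 - be * t2))
   = b * s + t1 - a * t1 - be * t2 by rewrite mulVKr.
have E := coinc sg fr Gk1 Gk2 (coinc_U r Hx).
have /= E' := f_equal (@ab R) E.
have : a * b - b = 0 by apply: (by_diff _ E'); qring.
by move=> Z; move: nab; rewrite mulrBl mul1r Z eqxx.
Qed.

Lemma in_G2_of g : G g -> aa g = 1 -> ac g = 0 -> in_G2 g.
Proof. move=> Gg a1 c0; split => // E; have /eqP := ad_neq0 sg Gg c0; apply; exact: E. Qed.

Lemma goal_id : (forall g, G g -> aa g = 1 /\ ac g = 0) -> goal G.
Proof.
move=> Hg; exists (aid R), (aid R); split; rewrite ?acom1g //.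
by move=> g Gg; rewrite acom1g acomg1; case: (Hg g Gg) => ??; exact: in_G2_of.
Qed.
End G.

Section Conj.
Variables P Pi : Af.
Hypothesis HP : acomp P Pi = aid R.
Hypothesis HPi : acomp Pi P = aid R.

Definition conjset (G : Af -> Prop) : Af -> Prop :=
  fun g => exists g', G g' /\ g = acomp (acomp Pi g') P.

Lemma conjM g h : acomp (acomp (acomp Pi g) P) (acomp (acomp Pi h) P) = acomp (acomp Pi (acomp g h)) P.
Proof. by rewrite -!acompA (acompA P Pi) HP acom1g. Qed.
Lemma conj1 : acomp (acomp Pi (aid R)) P = aid R.
Proof. by rewrite acomg1 HPi. Qed.

Lemma conj_sub G : is_Aff_subgroup G -> is_Aff_subgroup (conjset G).
Proof.
case => A I M V; split.
- move=> g [g' [Gg' ->]]; have [h [Gh E1 E2]] := V g' Gg'.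
  by exists (acomp (acomp Pi h) P); rewrite !conjM E1 E2 conj1.
- by exists (aid R); split => //; rewrite conj1.
- move=> g h [g' [G1 ->]] [h' [G2 ->]]; exists (acomp g' h'); split; first exact: M.
  by rewrite conjM.
- move=> g [g' [G1 ->]]; have [h [Gh E1 E2]] := V g' G1.
  exists (acomp (acomp Pi h) P); split; first by exists h.
    by rewrite conjM E1 conj1.
  by rewrite conjM E2 conj1.
Qed.

Lemma conj_free G : acts_freely G -> acts_freely (conjset G).
Proof.
move=> F g [g' [G1 ->]] p; rewrite !actM => E.
have E2 : act g' (act P p) = act P p by rewrite -{2}E -(actM P Pi) HP act1.
by rewrite (F _ G1 _ E2) conj1.
Qed.

Lemma conj_goal G : goal (conjset G) -> goal G.
Proof.
move=> [h [hi [E1 E2 Hg]]]; exists (acomp h Pi), (acomp P hi); split.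
- by rewrite -!acompA (acompA Pi P) HPi acom1g E1.
- by rewrite -!acompA (acompA hi h) E2 acom1g HP.
- move=> g Gg; have := Hg _ (ex_intro _ g (conj Gg erefl)).
  by rewrite -!acompA.
Qed.
End Conj.

Section G2.
Variable G : Af -> Prop.
Hypothesis sg : is_Aff_subgroup G.
Hypothesis fr : acts_freely G.

Lemma norm1 g0 : G g0 -> aa g0 = 1 -> ac g0 = 0 -> ~ (ab g0 = 0 /\ ad g0 = 1) -> goal G.
Proof.
move: g0 => [a b c d t1 t2] G0 /= a1 c0 nI; subst a c.
have [d1|nd] := eqVneq d 1.
  subst d; have nb : b != 0 by apply/eqP => b0; apply: nI.
  apply: (goal_id sg) => h Gh; exact: (final sg fr G0 (or_intror (conj erefl nb)) Gh).
have [p Hp] : exists p, p * (d - 1) = b.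
  by exists (b * (d - 1)^-1); rewrite mulrVK // qunitE subr_eq0.
subst b.
have HP1 : acomp (Aff 1 p 0 1 0 0) (Aff 1 (-p) 0 1 0 0) = aid R.
  by rewrite acompE aidE /=; congr Aff; qring.
have HP2 : acomp (Aff 1 (-p) 0 1 0 0) (Aff 1 p 0 1 0 0) = aid R.
  by rewrite acompE aidE /=; congr Aff; qring.
apply: (conj_goal HP1 HP2).
have sg' := conj_sub HP1 HP2 sg.
have fr' := conj_free HP1 HP2 fr.
have G0' : conjset (Aff 1 p 0 1 0 0) (Aff 1 (-p) 0 1 0 0) G (Aff 1 0 0 d (t1 - p * t2) t2).
  exists (Aff 1 (p * (d - 1)) 0 d t1 t2); split => //.
  by rewrite !acompE /=; congr Aff; qring.
apply: (goal_id sg') => h Gh.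
exact: (final sg' fr' G0' (or_introl (conj erefl nd)) Gh).
Qed.
End G2.

End Q2.


Section Q3.
Variable R : realType.
Local Notation H := (quat R).
Local Notation Af := (aff R).

Lemma colP (P Pi g : Af) : acomp Pi P = aid R -> aa g * aa P + ab g * ac P = aa P ->
  ac g * aa P + ad g * ac P = ac P ->
  aa (acomp (acomp Pi g) P) = 1 /\ ac (acomp (acomp Pi g) P) = 0.
Proof.
move=> E K1 K2.
have e1 := f_equal (@aa R) E; have e2 := f_equal (@ac R) E; rewrite acompE /= in e1 e2.
split.
  have -> : aa (acomp (acomp Pi g) P) = aa Pi * (aa g * aa P + ab g * ac P) + ab Pi * (ac g * aa P + ad g * ac P).
    by rewrite !acompE /=; qring.
  by rewrite K1 K2; exact: e1.
have -> : ac (acomp (acomp Pi g) P) = ac Pi * (aa g * aa P + ab g * ac P) + ad Pi * (ac g * aa P + ad g * ac P).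
  by rewrite !acompE /=; qring.
by rewrite K1 K2; exact: e2.
Qed.

Definition lin_id (g : Af) := aa g = 1 /\ ab g = 0 /\ ac g = 0 /\ ad g = 1.

Lemma lin_conj (P Pi g : Af) : acomp P Pi = aid R -> lin_id g -> lin_id (acomp (acomp P g) Pi).
Proof.
move=> E; case: g => a b c d r s [/= -> [-> [-> ->]]].
have e1 := f_equal (@aa R) E; have e2 := f_equal (@ab R) E.
have e3 := f_equal (@ac R) E; have e4 := f_equal (@ad R) E.
rewrite acompE /= in e1 e2 e3 e4.
rewrite /lin_id !acompE /=; split; first by apply: (etrans _ e1); qring.
split; first by apply: (etrans _ e2); qring.
split; first by apply: (etrans _ e3); qring.
by apply: (etrans _ e4); qring.
Qed.

Section G3.
Variable G : Af -> Prop.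
Hypothesis sg : is_Aff_subgroup G.
Hypothesis fr : acts_freely G.

Lemma step2 g0 P Pi : G g0 -> ~ lin_id g0 -> acomp P Pi = aid R -> acomp Pi P = aid R ->
  aa g0 * aa P + ab g0 * ac P = aa P -> ac g0 * aa P + ad g0 * ac P = ac P -> goal G.
Proof.
move=> G0 nI HP HPi K1 K2.
apply: (conj_goal HP HPi).
have sg' := conj_sub HP HPi sg.
have fr' := conj_free HP HPi fr.
have G0' : conjset P Pi G (acomp (acomp Pi g0) P) by exists g0.
have [c1 c2] := colP HPi K1 K2.
apply: (norm1 sg' fr' G0' c1 c2) => -[b0 d1].
apply: nI.
have Eg : acomp (acomp P (acomp (acomp Pi g0) P)) Pi = g0.
  by rewrite -!acompA (acompA P Pi) HP acom1g acomg1.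
rewrite -Eg; apply: lin_conj => //.
Qed.

Lemma ker_id (a b x1 x2 : H) : (a - 1) * x1 + b * x2 = 0 -> a * x1 + b * x2 = x1.
Proof. by move=> E; apply: (by_diff _ E); qring. Qed.

Lemma main_goal : goal G.
Proof.
have [[g0 [G0 nI]]|none] := classic (exists g0, G g0 /\ ~ lin_id g0); last first.
  apply: (goal_id sg) => g Gg.
  have : lin_id g by apply: NNPP => nI; apply: none; exists g.
  by case=> [a1 [_ [c0 _]]].
have [[x1 [x2 [nz [K1 K2]]]]|sol] := dich (aa g0 - 1) (ab g0) (ac g0) (ad g0 - 1); last first.
  have [x1 [x2 [E1 E2]]] := sol (- ar g0) (- as' g0).
  have hid := fix_sol fr G0 (ex_intro _ x1 (ex_intro _ x2 (conj E1 E2))).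
  by exfalso; apply: nI; rewrite hid.
have K1' := ker_id K1.
have K2' : ac g0 * x1 + ad g0 * x2 = x2.
  by apply: (by_diff _ K2); qring.
have [x10|nx1] := eqVneq x1 0.
  have nx2 : x2 != 0 by case: nz => //; rewrite x10 eqxx.
  subst x1.
  have HP : acomp (Aff 0 1 x2 0 0 0) (Aff 0 x2^-1 1 0 0 0) = aid R.
    rewrite acompE aidE /=; congr Aff;
    rewrite ?mul0r ?mulr0 ?add0r ?addr0 ?mul1r ?mulr1 ?mulrV ?qunitE //.
  have HPi : acomp (Aff 0 x2^-1 1 0 0 0) (Aff 0 1 x2 0 0 0) = aid R.
    rewrite acompE aidE /=; congr Aff;
    rewrite ?mul0r ?mulr0 ?add0r ?addr0 ?mul1r ?mulr1 ?mulVr ?qunitE //.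
  by apply: (step2 G0 nI HP HPi).
have HP : acomp (Aff x1 0 x2 1 0 0) (Aff x1^-1 0 (- (x2 * x1^-1)) 1 0 0) = aid R.
  rewrite acompE aidE /=; congr Aff;
  rewrite ?mul0r ?mulr0 ?add0r ?addr0 ?mul1r ?mulr1 ?mulrV ?subrr ?qunitE //.
have HPi : acomp (Aff x1^-1 0 (- (x2 * x1^-1)) 1 0 0) (Aff x1 0 x2 1 0 0) = aid R.
  rewrite acompE aidE /=; congr Aff;
  rewrite ?mul0r ?mulr0 ?add0r ?addr0 ?mul1r ?mulr1 ?mulVr ?mulNr ?mulrVK ?addNr ?qunitE //.
by apply: (step2 G0 nI HP HPi).
Qed.
End G3.
End Q3.

Theorem mainTheorem10 (R : realType) (Gamma : aff R -> Prop) :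
  is_Aff_subgroup Gamma -> acts_freely Gamma ->
  exists h hinv : aff R,
    [/\ acomp h hinv = aid R, acomp hinv h = aid R &
        forall g, Gamma g -> in_G2 (acomp (acomp h g) hinv)].
Proof. move=> sg fr; exact: (main_goal sg fr). Qed.
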